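(* Let $\mathcal{V}$ be a non-trivial quantale, $\mathsf{F}\colon\mathbf{Set}\to\mathbf{Set}$ a functor and $\widehat{\mathsf{F}}$ a lifting of $\mathsf{F}$ to $\mathbf{Cat}(\mathcal{V})$. Then $\widehat{\mathsf{F}}$ is induced by a $\mathcal{V}$-enriched lax extension of $\mathsf{F}$ to $\mathbf{Rel}(\mathcal{V})$ if and only if $\widehat{\mathsf{F}}$ preserves initial morphisms and is $\mathbf{Cat}(\mathcal{V})$-enriched.
   Context: A quantale $(\mathcal{V},\otimes,k)$ is a complete lattice with commutative monoid structure, each $u\otimes-$ preserving joins, $\hom(u,-)$ its right adjoint; non-trivial: $\bot\ne\top$. $\mathcal{V}$-categories $(X,a)$: $k\le a(x,x)$, $a(x,y)\otimes a(y,z)\le a(x,z)$; $\mathcal{V}$-functors $f\colon(X,a)\to(Y,b)$: $a(x,y)\le b(f x,f y)$; initial if equality holds. A lifting of $\mathsf{F}$ is a functor $\widehat{\mathsf{F}}$ on $\mathbf{Cat}(\mathcal{V})$ with $|\widehat{\mathsf{F}}-|=\mathsf{F}|-|$. Each hom-set $\mathbf{Cat}(\mathcal{V})((X,a),(Y,b))$ carries the $\mathcal{V}$-category structure $[f,g]=\bigwedge_{x}b(f(x),g(x))$; a functor $\mathsf{G}$ on $\mathbf{Cat}(\mathcal{V})$ is $\mathbf{Cat}(\mathcal{V})$-enriched if $[f,g]\le[\mathsf{G}f,\mathsf{G}g]$ for all parallel $\mathcal{V}$-functors $f,g$. $\mathcal{V}$-relations $r\colon X\nrightarrow Y$ are maps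 $X\times Y\to\mathcal{V}$, composed by $(s\cdot r)(x,z)=\bigvee_y r(x,y)\otimes s(y,z)$, converse $r^\circ(y,x)=r(x,y)$, identity $1_X$ ($k$ on diagonal, $\bot$ elsewhere), functions viewed as relations with value $k$ on the graph and $\bot$ elsewhere; $(u\otimes r)(x,y)=u\otimes r(x,y)$. A lax extension of $\mathsf{F}$ assigns to each $r\colon X\nrightarrow Y$ a $\widehat{\mathsf{F}}r\colon\mathsf{F}X\nrightarrow\mathsf{F}Y$ with (L1) $r\le r'\Rightarrow\widehat{\mathsf{F}}r\le\widehat{\mathsf{F}}r'$, (L2) $\widehat{\mathsf{F}}s\cdot\widehat{\mathsf{F}}r\le\widehat{\mathsf{F}}(s\cdot r)$, (L3) $\mathsf{F}f\le\widehat{\mathsf{F}}f$ and $(\mathsf{F}f)^\circ\le\widehat{\mathsf{F}}(f^\circ)$; it is $\mathcal{V}$-enriched if $u\otimes1_{\mathsf{F}X}\le\widehat{\mathsf{F}}(u\otimes1_X)$ for all $u\in\mathcal{V}$ and sets $X$. The induced lifting sends $(X,a)$ to $(\mathsf{F}X,\widehat{\mathsf{F}}a)$. *)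

(* Defs.v *)
Set Implicit Arguments.
Unset Strict Implicit.

(* A complete lattice presented by its order and arbitrary joins [sup]
   (over predicates = subsets), with a commutative monoid structure
   (tensor, k) such that each [u (x) -] preserves all joins. *)
Record quantale := Quantale {
  qcar :> Type;
  qle : qcar -> qcar -> Prop;
  qle_refl : forall u, qle u u;
  qle_trans : forall u v w, qle u v -> qle v w -> qle u w;
  qle_antisym : forall u v, qle u v -> qle v u -> u = v;
  qsup : (qcar -> Prop) -> qcar;
  qsup_ub : forall (S : qcar -> Prop) u, S u -> qle u (qsup S);
  qsup_least : forall (S : qcar -> Prop) w,
      (forall u, S u -> qle u w) -> qle (qsup S) w;
  qtens : qcar -> qcar -> qcar;
  qk : qcar;
  qtens_assoc : forall u v w, qtens u (qtens v w) = qtens (qtens u v) w;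
  qtens_comm : forall u v, qtens u v = qtens v u;
  qtens_unit : forall u, qtens qk u = u;
  qtens_sup : forall u (S : qcar -> Prop),
      qtens u (qsup S) = qsup (fun w => exists v, S v /\ w = qtens u v)
}.

Section QuantaleDefs.
Variable V : quantale.

Definition qbot : V := qsup (fun _ => False).
Definition qtop : V := qsup (fun _ => True).
Definition qinf (S : V -> Prop) : V :=
  qsup (fun v => forall s, S s -> qle v s).

Definition nontrivial : Prop := qbot <> qtop.

Definition is_vcat (X : Type) (a : X -> X -> V) : Prop :=
  (forall x, qle (qk V) (a x x)) /\
  (forall x y z, qle (qtens (a x y) (a y z)) (a x z)).

Definition is_vfun (X Y : Type) (a : X -> X -> V) (b : Y -> Y -> V)
  (f : X -> Y) : Prop :=
  forall x y, qle (a x y) (b (f x) (f y)).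

Definition is_initial (X Y : Type) (a : X -> X -> V) (b : Y -> Y -> V)
  (f : X -> Y) : Prop :=
  forall x y, a x y = b (f x) (f y).

Definition homV (X Y : Type) (b : Y -> Y -> V) (f g : X -> Y) : V :=
  qinf (fun v => exists x, v = b (f x) (g x)).

Definition vrel (X Y : Type) := X -> Y -> V.

Definition rle (X Y : Type) (r s : vrel X Y) : Prop :=
  forall x y, qle (r x y) (s x y).

Definition rcomp (X Y Z : Type) (s : vrel Y Z) (r : vrel X Y) : vrel X Z :=
  fun x z => qsup (fun v => exists y, v = qtens (r x y) (s y z)).

Definition rconv (X Y : Type) (r : vrel X Y) : vrel Y X :=
  fun y x => r x y.

(* a function viewed as a V-relation: k on the graph, bottom elsewhere *)
Definition rgraph (X Y : Type) (f : X -> Y) : vrel X Y :=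
  fun x y => qsup (fun v => f x = y /\ v = qk V).

Definition rid (X : Type) : vrel X X := rgraph (fun x : X => x).

Definition rscale (X Y : Type) (u : V) (r : vrel X Y) : vrel X Y :=
  fun x y => qtens u (r x y).

End QuantaleDefs.

Record functor := Functor {
  Fobj :> Type -> Type;
  fmap : forall {A B : Type}, (A -> B) -> Fobj A -> Fobj B;
  fmap_id : forall (A : Type) (p : Fobj A), fmap (fun x : A => x) p = p;
  fmap_comp : forall (A B C : Type) (f : A -> B) (g : B -> C) (p : Fobj A),
      fmap (fun x => g (f x)) p = fmap g (fmap f p)
}.

(* ---------- Liftings of F to Cat(V) ----------
   Since |Fhat -| = F |-|, a lifting is given by a V-category structure
   [lift X a] on F X for every V-category (X,a), such that F f is a
   V-functor whenever f is (the action on morphisms is forced to be F f;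
   functoriality is then inherited from F).  Values of [lift] on
   structures that are not V-categories are irrelevant. *)
Record lifting (V : quantale) (F : functor) := Lifting {
  lift : forall X : Type, (X -> X -> V) -> F X -> F X -> V;
  lift_vcat : forall (X : Type) (a : X -> X -> V),
      is_vcat a -> is_vcat (lift a);
  lift_vfun : forall (X Y : Type) (a : X -> X -> V) (b : Y -> Y -> V)
      (f : X -> Y), is_vcat a -> is_vcat b -> is_vfun a b f ->
      is_vfun (lift a) (lift b) (@fmap F _ _ f)
}.

Definition preserves_initial (V : quantale) (F : functor) (L : lifting V F)
  : Prop :=
  forall (X Y : Type) (a : X -> X -> V) (b : Y -> Y -> V) (f : X -> Y),
    is_vcat a -> is_vcat b -> is_initial a b f ->
    is_initial (lift L a) (lift L b) (@fmap F _ _ f).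

Definition catV_enriched (V : quantale) (F : functor) (L : lifting V F)
  : Prop :=
  forall (X Y : Type) (a : X -> X -> V) (b : Y -> Y -> V) (f g : X -> Y),
    is_vcat a -> is_vcat b -> is_vfun a b f -> is_vfun a b g ->
    qle (homV b f g) (homV (lift L b) (@fmap F _ _ f) (@fmap F _ _ g)).

Record lax_extension (V : quantale) (F : functor) := LaxExtension {
  ext : forall X Y : Type, vrel V X Y -> vrel V (F X) (F Y);
  ext_L1 : forall (X Y : Type) (r r' : vrel V X Y),
      rle r r' -> rle (ext r) (ext r');
  ext_L2 : forall (X Y Z : Type) (r : vrel V X Y) (s : vrel V Y Z),
      rle (rcomp (ext s) (ext r)) (ext (rcomp s r));
  ext_L3a : forall (X Y : Type) (f : X -> Y),
      rle (rgraph V (@fmap F _ _ f)) (ext (rgraph V f));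
  ext_L3b : forall (X Y : Type) (f : X -> Y),
      rle (rconv (rgraph V (@fmap F _ _ f))) (ext (rconv (rgraph V f)))
}.

Definition V_enriched (V : quantale) (F : functor) (E : lax_extension V F)
  : Prop :=
  forall (u : V) (X : Type),
    rle (rscale u (@rid V (F X))) (ext E (rscale u (@rid V X))).

Definition induced_by (V : quantale) (F : functor) (L : lifting V F)
  (E : lax_extension V F) : Prop :=
  forall (X : Type) (a : X -> X -> V), is_vcat a ->
    forall p q : F X, lift L a p q = ext E a p q.

(* Main.v *)
Require Import Defs.
From Stdlib Require Import Setoid.

Section Q.
Variable V : quantale.

Lemma qtens_unit_r (u : V) : qtens u (qk V) = u.
Proof. rewrite qtens_comm; apply qtens_unit. Qed.

Lemma qtens_mono_r (w u v : V) : qle u v -> qle (qtens w u) (qtens w v).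
Proof.
  intro H.
  assert (E : v = qsup (fun z => z = u \/ z = v)).
  { apply qle_antisym.
    - apply qsup_ub; auto.
    - apply qsup_least; intros z [->| ->]; auto using qle_refl. }
  rewrite E, qtens_sup. apply qsup_ub. exists u; auto.
Qed.

Lemma qtens_mono_l (w u v : V) : qle u v -> qle (qtens u w) (qtens v w).
Proof. intro H; rewrite (qtens_comm u), (qtens_comm v); apply qtens_mono_r; auto. Qed.

Lemma qtens_mono (u u' v v' : V) : qle u u' -> qle v v' -> qle (qtens u v) (qtens u' v').
Proof. intros; eapply qle_trans; [apply qtens_mono_l; eauto | apply qtens_mono_r; auto]. Qed.

Lemma qtens_graph_r A B (f : A -> B) x y (t t' : V) :
  (f x = y -> qle t t') -> qle (qtens t (rgraph V f x y)) t'.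
Proof.
  intro H. unfold rgraph. rewrite qtens_sup. apply qsup_least.
  intros w [v [[H1 H2] ->]]. subst v. rewrite qtens_unit_r. auto.
Qed.

Lemma qtens_graph_l A B (f : A -> B) x y (t t' : V) :
  (f x = y -> qle t t') -> qle (qtens (rgraph V f x y) t) t'.
Proof. intro H; rewrite qtens_comm; apply qtens_graph_r; auto. Qed.

Lemma graph_ge A B (f : A -> B) x : qle (qk V) (rgraph V f x (f x)).
Proof. unfold rgraph. apply qsup_ub. auto. Qed.

Lemma qtens_bot_r (t w : V) : qle (qtens t (qbot V)) w.
Proof. unfold qbot. rewrite qtens_sup. apply qsup_least. intros z [v [[] _]]. Qed.

Lemma qtens_bot_l (t w : V) : qle (qtens (qbot V) t) w.
Proof. rewrite qtens_comm; apply qtens_bot_r. Qed.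

Lemma qinf_lb (S : V -> Prop) s : S s -> qle (qinf S) s.
Proof. intro H; unfold qinf; apply qsup_least; intros v Hv; apply Hv; auto. Qed.

Lemma qinf_glb (S : V -> Prop) u : (forall s, S s -> qle u s) -> qle u (qinf S).
Proof. intro H; unfold qinf; apply qsup_ub; auto. Qed.

Lemma rid_le X (a : X -> X -> V) : is_vcat a -> forall x y, qle (rid V x y) (a x y).
Proof.
  intros [Hr _] x y. unfold rid, rgraph. apply qsup_least. intros v [-> ->]. apply Hr.
Qed.

Lemma rid_vcat X : is_vcat (rid V (X:=X)).
Proof.
  split.
  - intro x; apply graph_ge.
  - intros x y z. apply qtens_graph_l. intros ->. apply qle_refl.
Qed.

Lemma vfun_rid X Z (c : Z -> Z -> V) (f : X -> Z) : is_vcat c -> is_vfun (rid V (X:=X)) c f.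
Proof.
  intros Hc x y. unfold rid, rgraph. apply qsup_least. intros v [-> ->]. apply Hc.
Qed.

End Q.

Section Fwd.
Variables (V : quantale) (F : functor) (E : lax_extension V F).

Lemma LA X Y Z (r : vrel V X Y) (s : vrel V X Z) (g : Y -> Z) :
  rle (rcomp (rgraph V g) r) s -> forall p q, qle (ext E r p q) (ext E s p (fmap g q)).
Proof.
  intros H p q.
  apply qle_trans with (ext E (rcomp (rgraph V g) r) p (fmap g q)); [| apply ext_L1; exact H].
  apply qle_trans with (rcomp (ext E (rgraph V g)) (ext E r) p (fmap g q)); [| apply ext_L2].
  unfold rcomp at 1.
  apply qle_trans with (qtens (ext E r p q) (ext E (rgraph V g) q (fmap g q)));
    [| apply qsup_ub; eexists; reflexivity].
  rewrite <- (qtens_unit_r _ (ext E r p q)) at 1. apply qtens_mono_r.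
  eapply qle_trans; [apply graph_ge | apply ext_L3a].
Qed.

Lemma LB X Y Z (r : vrel V X Z) (s : vrel V Y Z) (f : X -> Y) :
  rle (rcomp r (rconv (rgraph V f))) s -> forall p q, qle (ext E r p q) (ext E s (fmap f p) q).
Proof.
  intros H p q.
  apply qle_trans with (ext E (rcomp r (rconv (rgraph V f))) (fmap f p) q); [| apply ext_L1; exact H].
  apply qle_trans with (rcomp (ext E r) (ext E (rconv (rgraph V f))) (fmap f p) q); [| apply ext_L2].
  unfold rcomp at 1.
  apply qle_trans with (qtens (ext E (rconv (rgraph V f)) (fmap f p) p) (ext E r p q));
    [| apply qsup_ub; eexists; reflexivity].
  rewrite <- (qtens_unit (ext E r p q)) at 1. apply qtens_mono_l.
  eapply qle_trans; [apply (graph_ge V _ _ (fmap f) p) | apply (ext_L3b E f (fmap f p) p)].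
Qed.

Lemma LA' X Y Z (r : vrel V X Z) (s : vrel V X Y) (g : Y -> Z) :
  rle (rcomp (rconv (rgraph V g)) r) s -> forall p q, qle (ext E r p (fmap g q)) (ext E s p q).
Proof.
  intros H p q.
  apply qle_trans with (ext E (rcomp (rconv (rgraph V g)) r) p q); [| apply ext_L1; exact H].
  apply qle_trans with (rcomp (ext E (rconv (rgraph V g))) (ext E r) p q); [| apply ext_L2].
  unfold rcomp at 1.
  apply qle_trans with (qtens (ext E r p (fmap g q)) (ext E (rconv (rgraph V g)) (fmap g q) q));
    [| apply qsup_ub; eexists; reflexivity].
  rewrite <- (qtens_unit_r _ (ext E r p (fmap g q))) at 1. apply qtens_mono_r.
  eapply qle_trans; [apply (graph_ge V _ _ (fmap g) q) | apply (ext_L3b E g (fmap g q) q)].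
Qed.

Lemma LB' X Y Z (r : vrel V Y Z) (s : vrel V X Z) (f : X -> Y) :
  rle (rcomp r (rgraph V f)) s -> forall p q, qle (ext E r (fmap f p) q) (ext E s p q).
Proof.
  intros H p q.
  apply qle_trans with (ext E (rcomp r (rgraph V f)) p q); [| apply ext_L1; exact H].
  apply qle_trans with (rcomp (ext E r) (ext E (rgraph V f)) p q); [| apply ext_L2].
  unfold rcomp at 1.
  apply qle_trans with (qtens (ext E (rgraph V f) p (fmap f p)) (ext E r (fmap f p) q));
    [| apply qsup_ub; eexists; reflexivity].
  rewrite <- (qtens_unit (ext E r (fmap f p) q)) at 1. apply qtens_mono_l.
  eapply qle_trans; [apply graph_ge | apply ext_L3a].
Qed.

End Fwd.

Lemma forward (V : quantale) (F : functor) (L : lifting V F) (E : lax_extension V F) :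
  V_enriched E -> induced_by L E -> preserves_initial L /\ catV_enriched L.
Proof.
  intros HE Hind. split.
  - intros X Y a b f Ha Hb Hf p q.
    apply qle_antisym.
    + apply (lift_vfun L Ha Hb). intros x y; rewrite Hf; apply qle_refl.
    + rewrite (Hind _ _ Ha), (Hind _ _ Hb).
      eapply qle_trans.
      * apply (LB' V F E _ _ _ b (fun x y => b (f x) y) f).
        intros x y. unfold rcomp. apply qsup_least. intros v [w ->].
        apply qtens_graph_l. intros <-. apply qle_refl.
      * apply (LA' V F E _ _ _ (fun x y => b (f x) y) a f).
        intros x y. unfold rcomp, rconv. apply qsup_least. intros v [w ->].
        apply qtens_graph_r. intros <-. rewrite Hf. apply qle_refl.
  - intros X Y a b f g Ha Hb Hf Hg.
    apply qinf_glb. intros s [p ->].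
    rewrite (Hind _ _ Hb).
    set (u := homV b f g).
    apply qle_trans with (ext E (rscale u (rid V (X:=X))) p p).
    { eapply qle_trans; [| apply HE]. unfold rscale.
      rewrite <- (qtens_unit_r _ u) at 1. apply qtens_mono_r. apply graph_ge. }
    apply qle_trans with (ext E (fun x x' => b (f x) (g x')) p p).
    { apply ext_L1. intros x x'. unfold rscale. rewrite qtens_comm.
      apply qtens_graph_l. intros <-. apply qinf_lb. exists x; reflexivity. }
    eapply qle_trans.
    { apply (LA V F E _ _ _ (fun x x' => b (f x) (g x')) (fun x y => b (f x) y) g).
      intros x y. unfold rcomp. apply qsup_least. intros v [w ->].
      apply qtens_graph_r. intros <-. apply qle_refl. }
    apply (LB V F E _ _ _ (fun x y => b (f x) y) b f).
    intros x y. unfold rcomp, rconv. apply qsup_least. intros v [w ->].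
    apply qtens_graph_l. intros <-. apply qle_refl.
Qed.
Set Implicit Arguments.

Section Bwd.
Variable V : quantale.

Definition bi X Y (sX : vrel V X X) (sY : vrel V Y Y) (r : vrel V X Y) : vrel V (X + Y) (X + Y) :=
  fun u v => match u, v with
  | inl x, inl x' => sX x x'
  | inr y, inr y' => sY y y'
  | inl x, inr y => r x y
  | inr _, inl _ => qbot V
  end.

Lemma bi_vcat X Y sX sY (r : vrel V X Y) :
  is_vcat sX -> is_vcat sY ->
  (forall x x' y, qle (qtens (sX x x') (r x' y)) (r x y)) ->
  (forall x y y', qle (qtens (r x y) (sY y y')) (r x y')) ->
  is_vcat (bi sX sY r).
Proof.
  intros [HX1 HX2] [HY1 HY2] H1 H2. split.
  - intros [x|y]; simpl; auto.
  - intros [x|y] [x'|y'] [x''|y'']; simpl;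
      auto using qtens_bot_l, qtens_bot_r.
Qed.

Definition tri X Y Z (sX : vrel V X X) (sY : vrel V Y Y) (sZ : vrel V Z Z)
  (rXY : vrel V X Y) (rYZ : vrel V Y Z) (rXZ : vrel V X Z) :
  vrel V (X + (Y + Z)) (X + (Y + Z)) :=
  fun u v => match u, v with
  | inl x, inl x' => sX x x'
  | inl x, inr (inl y) => rXY x y
  | inl x, inr (inr z) => rXZ x z
  | inr (inl y), inr (inl y') => sY y y'
  | inr (inl y), inr (inr z) => rYZ y z
  | inr (inr z), inr (inr z') => sZ z z'
  | _, _ => qbot V
  end.

Lemma tri_vcat X Y Z sX sY sZ (rXY : vrel V X Y) (rYZ : vrel V Y Z) (rXZ : vrel V X Z) :
  is_vcat sX -> is_vcat sY -> is_vcat sZ ->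
  (forall x x' y, qle (qtens (sX x x') (rXY x' y)) (rXY x y)) ->
  (forall x y y', qle (qtens (rXY x y) (sY y y')) (rXY x y')) ->
  (forall y y' z, qle (qtens (sY y y') (rYZ y' z)) (rYZ y z)) ->
  (forall y z z', qle (qtens (rYZ y z) (sZ z z')) (rYZ y z')) ->
  (forall x x' z, qle (qtens (sX x x') (rXZ x' z)) (rXZ x z)) ->
  (forall x z z', qle (qtens (rXZ x z) (sZ z z')) (rXZ x z')) ->
  (forall x y z, qle (qtens (rXY x y) (rYZ y z)) (rXZ x z)) ->
  is_vcat (tri sX sY sZ rXY rYZ rXZ).
Proof.
  intros [HX1 HX2] [HY1 HY2] [HZ1 HZ2] H1 H2 H3 H4 H5 H6 H7. split.
  - intros [x|[y|z]]; simpl; auto.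
  - intros [x|[y|z]] [x'|[y'|z']] [x''|[y''|z'']]; simpl;
      auto using qtens_bot_l, qtens_bot_r.
Qed.

End Bwd.

Section B2.
Variables (V : quantale) (F : functor) (L : lifting V F).
Hypothesis Hpi : preserves_initial L.
Hypothesis Hen : catV_enriched L.

Definition extE X Y (r : vrel V X Y) : vrel V (F X) (F Y) :=
  fun p q => lift L (bi (rid V (X:=X)) (rid V (X:=Y)) r) (fmap (@inl X Y) p) (fmap (@inr X Y) q).

Lemma bi_rid_vcat X Y (r : vrel V X Y) : is_vcat (bi (rid V (X:=X)) (rid V (X:=Y)) r).
Proof.
  apply bi_vcat; try apply rid_vcat.
  - intros x x' y. apply qtens_graph_l. intros ->. apply qle_refl.
  - intros x y y'. apply qtens_graph_r. intros ->. apply qle_refl.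
Qed.

Lemma enr_k X Z (c : vrel V Z Z) (f g : X -> Z) (u : V) :
  is_vcat c -> (forall x, qle u (c (f x) (g x))) ->
  forall p, qle u (lift L c (fmap f p) (fmap g p)).
Proof.
  intros Hc H p.
  apply qle_trans with (homV c f g).
  { apply qinf_glb. intros s [x ->]. auto. }
  eapply qle_trans.
  { apply (Hen (a := rid V (X:=X))); auto using rid_vcat, vfun_rid. }
  apply qinf_lb. exists p; reflexivity.
Qed.

Lemma E_L1 X Y (r r' : vrel V X Y) : rle r r' -> rle (extE r) (extE r').
Proof.
  intros H p q. unfold extE.
  pose proof (@lift_vfun _ _ L _ _ _ _ (fun x => x) (bi_rid_vcat r) (bi_rid_vcat r')) as K.
  eapply qle_trans; [apply K|].
  - intros [x|y] [x'|y']; simpl; auto using qle_refl.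
  - rewrite !fmap_id. apply qle_refl.
Qed.

Lemma E_L2 X Y Z (r : vrel V X Y) (s : vrel V Y Z) :
  rle (rcomp (extE s) (extE r)) (extE (rcomp s r)).
Proof.
  intros p w. unfold rcomp at 1. apply qsup_least. intros v [q ->].
  set (T := tri (rid V (X:=X)) (rid V (X:=Y)) (rid V (X:=Z)) r s (rcomp s r)).
  assert (HT : is_vcat T).
  { apply tri_vcat; try apply rid_vcat;
      try (intros ? ? ?; apply qtens_graph_l; intros ->; apply qle_refl);
      try (intros ? ? ?; apply qtens_graph_r; intros ->; apply qle_refl).
    intros x y z. unfold rcomp. apply qsup_ub. exists y; reflexivity. }
  set (e1 := fun u : X + Y => match u with inl x => @inl X (Y + Z) x | inr y => inr (inl y) end).
  set (e2 := fun u : Y + Z => match u with inl y => @inr X (Y + Z) (inl y) | inr z => inr (inr z) end).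
  set (e3 := fun u : X + Z => match u with inl x => @inl X (Y + Z) x | inr z => inr (inr z) end).
  unfold extE.
  rewrite (Hpi (bi_rid_vcat r) HT (f := e1)) by (intros [?|?] [?|?]; reflexivity).
  rewrite (Hpi (bi_rid_vcat s) HT (f := e2)) by (intros [?|?] [?|?]; reflexivity).
  rewrite (Hpi (bi_rid_vcat (rcomp s r)) HT (f := e3)) by (intros [?|?] [?|?]; reflexivity).
  rewrite <- !fmap_comp.
  apply (lift_vcat L HT).
Qed.

Lemma E_L3a X Y (f : X -> Y) : rle (rgraph V (fmap f)) (extE (rgraph V f)).
Proof.
  intros p q. unfold rgraph at 1. apply qsup_least. intros v [<- ->].
  unfold extE. rewrite <- fmap_comp.
  apply (enr_k (inl) (fun x => inr (f x)) _); [apply bi_rid_vcat|].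
  intro x. apply graph_ge.
Qed.

Lemma E_L3b X Y (f : X -> Y) : rle (rconv (rgraph V (fmap f))) (extE (rconv (rgraph V f))).
Proof.
  intros p q. unfold rconv, rgraph at 1. apply qsup_least. intros v [<- ->].
  unfold extE. rewrite <- fmap_comp.
  apply (enr_k (fun x => inl (f x)) (inr) _); [apply bi_rid_vcat|].
  intro x. apply graph_ge.
Qed.

Definition EE : lax_extension V F := LaxExtension E_L1 E_L2 E_L3a E_L3b.

Lemma EE_enriched : V_enriched EE.
Proof.
  intros u X p q. unfold rscale. simpl. rewrite qtens_comm.
  apply qtens_graph_l. intros <-.
  unfold extE.
  apply (enr_k (inl) (inr) _); [apply bi_rid_vcat|].
  intro x. simpl. rewrite <- (qtens_unit_r _ u) at 1. apply qtens_mono_r. apply graph_ge.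
Qed.

Lemma EE_induced : induced_by L EE.
Proof.
  intros X a Ha p q. simpl. unfold extE. apply qle_antisym.
  - set (T := tri (rid V (X:=X)) a (rid V (X:=X)) a a a).
    assert (HT : is_vcat T).
    { destruct Ha as [Ha1 Ha2].
      apply tri_vcat; try apply rid_vcat; try split; auto;
        try (intros ? ? ?; apply qtens_graph_l; intros ->; apply qle_refl);
        try (intros ? ? ?; apply qtens_graph_r; intros ->; apply qle_refl). }
    set (m := fun u : X + X => match u with inl x => @inl X (X + X) x | inr x => inr (inr x) end).
    rewrite (Hpi (bi_rid_vcat a) HT (f := m)) by (intros [?|?] [?|?]; reflexivity).
    set (j := fun x : X => @inr X (X + X) (inl x)).
    rewrite (Hpi Ha HT (f := j)) by (intros ? ?; reflexivity).
    rewrite <- !fmap_comp.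
    apply qle_trans with (qtens (qtens (qk V) (lift L T (fmap j p) (fmap j q))) (qk V)).
    { rewrite qtens_unit, qtens_unit_r. apply qle_refl. }
    eapply qle_trans; [| apply (lift_vcat L HT)].
    apply qtens_mono.
    + eapply qle_trans; [| apply (lift_vcat L HT)].
      apply qtens_mono; [| apply qle_refl].
      apply (enr_k (fun x => m (inl x)) (j) _); auto.
      intro x. apply Ha.
    + apply (enr_k (j) (fun x => m (inr x)) _); auto.
      intro x. apply Ha.
  - set (nb := fun u : X + X => match u with inl x => x | inr x => x end).
    eapply qle_trans.
    { apply (lift_vfun L (bi_rid_vcat a) Ha (f := nb)).
      intros [x|x] [x'|x']; simpl; auto using qle_refl, qtens_bot_l.
      all: try (apply rid_le; auto).
      all: unfold qbot; apply qsup_least; intros ? []. }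
    rewrite <- !fmap_comp. rewrite !fmap_id. apply qle_refl.
Qed.

End B2.

Theorem theorem8 (V : quantale) (HV : nontrivial V) (F : functor)
  (L : lifting V F) :
  (exists E : lax_extension V F, V_enriched E /\ induced_by L E) <->
  (preserves_initial L /\ catV_enriched L).
Proof.
  split.
  - intros [E [HE Hind]]. exact (forward V F L E HE Hind).
  - intros [Hpi Hen]. exists (EE Hpi Hen). split.
    + apply EE_enriched.
    + apply EE_induced.
Qed.
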